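(* Let $u\ge1$ and let $Z\subseteq\{0,1,\dots,u\}$ be a finite set of integers, partitioned as $Z=Z^{(1)}\cup Z^{(2)}$ with $Z^{(1)}\cap Z^{(2)}=\emptyset$. Set $\mu:=\max(Z)/u$ and assume $\mu\le1/16$. Then for every $0\le\epsilon\le1/4$, \[ \Big|\mathcal{S}\big(Z^{(1)},(1+\epsilon)\tfrac u2\big)\Big|+\Big|\mathcal{S}\big(Z^{(2)},(1+\epsilon)\tfrac u2\big)\Big|\;\le\;\frac{|\mathcal{S}(Z,u)|+1}{1-2\epsilon-4\mu}. \]
   Context: For a finite set $X$ of integers and a real $t$, $\mathcal{S}(X,t)=\{\Sigma(Y): Y\subseteq X,\ \Sigma(Y)\le t\}$, where $\Sigma(Y)=\sum_{y\in Y}y$ (so $0=\Sigma(\emptyset)\in\mathcal{S}(X,t)$ for $t\ge0$). *)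

(* Defs.v *)
From mathcomp Require Import all_boot all_order all_algebra.
From mathcomp Require Import finmap.
Set Implicit Arguments. Unset Strict Implicit. Unset Printing Implicit Defensive.
Import Order.TTheory GRing.Theory Num.Theory.
Local Open Scope fset_scope.

Definition fsum (Y : {fset nat}) : nat := (\sum_(y <- Y) y)%N.

Definition subset_sums (R : realFieldType) (X : {fset nat}) (t : R) : {fset nat} :=
  [fset fsum Y | Y in fpowerset X & ((fsum Y)%:R <= t)%R].

(* max Z (0 if Z empty) *)
Definition fmax (Z : {fset nat}) : nat := (\max_(z <- Z) z)%N.

(* Main.v *)
Require Import Defs.
From mathcomp Require Import all_boot all_order all_algebra.
From mathcomp Require Import finmap.
From mathcomp Require Import zify ring lra.
From Stdlib Require Import Lia.
Import Order.TTheory GRing.Theory Num.Theory.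

Module Helpers.
Local Open Scope nat_scope.
Definition ss (X : {fset nat}) (n : nat) : {fset nat} :=
  [fset fsum Y | Y in fpowerset X & fsum Y <= n]%fset.

Lemma ssP X n s : reflect (exists Y, [/\ (Y `<=` X)%fset, fsum Y = s & s <= n]) (s \in ss X n).
Proof.
rewrite /ss; apply: (iffP idP).
  move/imfsetP => [Y] /= /andP [HY Hn] ->.
  by exists Y; split => //; move: HY; rewrite fpowersetE.
move=> [Y [HY <- Hn]]; apply/imfsetP; exists Y => //=.
rewrite inE /= Hn andbT; change (Y \in fpowerset X); by rewrite fpowersetE.
Qed.

Lemma fsumU (Y1 Y2 : {fset nat}) : (Y1 `&` Y2 = fset0)%fset ->
  fsum (Y1 `|` Y2)%fset = fsum Y1 + fsum Y2.
Proof.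
move=> H; rewrite /fsum (big_fsetID _ (mem Y1)) /=.
congr (_ + _); apply: eq_fbigl => x; rewrite !inE /=.
  by apply/andP/idP => [[]|->] //; rewrite orTb.
case x1: (x \in Y1) => /=; last by rewrite andbT.
apply/esym/negbTE; apply/negP => x2.
have : x \in (Y1 `&` Y2)%fset by rewrite inE x1 x2.
by rewrite H inE.
Qed.

Lemma fsum_sub {Y X : {fset nat}} : (Y `<=` X)%fset -> fsum Y <= fsum X.
Proof.
move=> H; rewrite /fsum (big_fsetID _ (mem Y) X) /=.
rewrite (_ : [fset x in X | x \in Y]%fset = Y) ?leq_addr //.
apply/fsetP => x; rewrite !inE /=; case xY: (x \in Y); rewrite ?andbF ?andbT //.
by rewrite (fsubsetP H).
Qed.

Lemma card_split (A : {fset nat}) (P : pred nat) :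
  #|` [fset x in A | P x]%fset| + #|` [fset x in A | ~~ P x]%fset| = #|` A|.
Proof.
rewrite -cardfsUI.
rewrite (_ : ([fset x in A | P x] `&` [fset x in A | ~~ P x])%fset = fset0); last first.
  by apply/fsetP => x; rewrite !inE; case: (P x); rewrite ?andbF ?andbT.
rewrite cardfs0 addn0; congr (#|` _|); apply/fsetP => x; rewrite !inE.
by case: (P x); rewrite ?andbT ?andbF ?orbF.
Qed.
Lemma fsum0 : fsum fset0 = 0.
Proof. by rewrite /fsum big_seq_fset0. Qed.

Lemma fsumD1 (X : {fset nat}) x : x \in X -> fsum X = x + fsum (X `\ x)%fset.
Proof.
move=> xX; rewrite /fsum -{1}(fsetD1K xX) big_fsetU1 //.
by rewrite !inE eqxx.
Qed.

Lemma gap {X : {fset nat}} {m v : nat} : 0 < m -> (forall x, x \in X -> x <= m) ->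
  v <= fsum X -> exists Y, (Y `<=` X)%fset /\ v <= fsum Y < v + m.
Proof.
move=> m0; move Hn: #|` X| => n; elim: n X Hn v => [|n IH] X Hn v Hm Hv.
  have HX := cardfs0_eq Hn; exists fset0; split; first exact: fsub0set.
  move: Hv; rewrite HX fsum0 leqn0 => /eqP ->; by rewrite add0n m0.
have : (X != fset0) by rewrite -cardfs_gt0 Hn.
case/fset0Pn => x xX.
have HX' : #|` (X `\ x)%fset| = n.
  by move: Hn; rewrite (cardfsD1 x X) xX add1n => -[].
have Hm' : forall y, y \in (X `\ x)%fset -> y <= m.
  by move=> y; rewrite inE => /andP [_ /Hm].
case: (leqP v (fsum (X `\ x)%fset)) => Hv'.
  have [Y [HY HYv]] := IH _ HX' v Hm' Hv'.
  exists Y; split => //; apply: fsubset_trans HY _; exact: fsubD1set.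
exists X; split; first exact: fsubset_refl.
rewrite Hv /= (fsumD1 _ _ xX).
have := Hm x xX; lia.
Qed.

Lemma card_split2 (A : {fset nat}) (L : nat) :
  #|` [fset x in A | x <= L]%fset| + #|` [fset x in A | L < x]%fset| = #|` A|.
Proof.
rewrite -(card_split A (fun x => x <= L)); congr (_ + #|` _|).
by apply/fsetP => x; rewrite !inE ltnNge.
Qed.

Lemma ss_add (Z1 Z2 : {fset nat}) n (Y1 Y2 : {fset nat}) :
  (Z1 `&` Z2 = fset0)%fset -> (Y1 `<=` Z1)%fset -> (Y2 `<=` Z2)%fset ->
  fsum Y1 + fsum Y2 <= n -> fsum Y1 + fsum Y2 \in ss (Z1 `|` Z2)%fset n.
Proof.
move=> H H1 H2 Hn; apply/ssP; exists (Y1 `|` Y2)%fset; split => //.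
- exact: fsetUSS.
- apply: fsumU; apply/fsetP => x; rewrite !inE.
  apply/negbTE/negP => /andP [x1 x2].
  have : x \in (Z1 `&` Z2)%fset by rewrite inE (fsubsetP H1 _ x1) (fsubsetP H2 _ x2).
  by rewrite H inE.
Qed.

Lemma ss_monoL (Z1 Z2 : {fset nat}) {n k} : n <= k ->
  (ss Z1 n `<=` ss (Z1 `|` Z2)%fset k)%fset.
Proof.
move=> nk; apply/fsubsetP => s /ssP [Y [HY <- Hn]]; apply/ssP; exists Y; split => //.
  by apply: fsubset_trans HY _; exact: fsubsetUl.
exact: leq_trans Hn nk.
Qed.

Lemma ss_monoR (Z1 Z2 : {fset nat}) {n k} : n <= k ->
  (ss Z2 n `<=` ss (Z1 `|` Z2)%fset k)%fset.
Proof. by move=> nk; rewrite fsetUC; apply: ss_monoL. Qed.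

Lemma ss0 X n : 0 \in ss X n.
Proof. by apply/ssP; exists fset0; rewrite fsum0; split => //; exact: fsub0set. Qed.

Lemma ss_le {X n s} : s \in ss X n -> s <= n.
Proof. by case/ssP => Y []. Qed.

Lemma bound1 (Z1 Z2 : {fset nat}) u Tn : (Z1 `&` Z2 = fset0)%fset -> Tn <= u ->
  #|` ss Z1 Tn| + #|` ss Z2 Tn| <=
  #|` ss (Z1 `|` Z2)%fset u| + 1 + #|` [fset b in ss Z2 Tn | u - Tn < b]%fset|.
Proof.
move=> H HT.
set A := ss Z1 Tn; set B := ss Z2 Tn; set C := ss (Z1 `|` Z2)%fset u.
have exA : exists i, (fun i => i \in A) i by exists 0; exact: ss0.
have ubA : forall i, (fun i => i \in A) i -> i <= Tn by move=> i /ss_le.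
case: (ex_maxnP exA ubA) => a aA amax.
case/ssP: (aA) => Y1 [HY1 Ha _].
set BL := [fset b in B | b <= u - Tn]%fset.
set E := (A `|` [fset addn a b | b in BL])%fset.
have EC : (E `<=` C)%fset.
  apply/fsubsetP => c; rewrite inE => /orP [cA|].
    exact: (fsubsetP (ss_monoL Z1 Z2 HT)) _ cA.
  case/imfsetP => b /=; rewrite inE => /andP [/ssP [Y2 [HY2 Hb _]] bL] ->.
  rewrite -Ha -Hb; apply: ss_add => //; rewrite Ha Hb.
  have := ubA _ aA; lia.
have HI : #|` (A `&` [fset addn a b | b in BL])%fset| <= 1.
  rewrite -(cardfs1 a); apply: fsubset_leq_card; apply/fsubsetP => c.
  rewrite inE => /andP [cA /imfsetP [b _ cE]].
  have := amax _ cA; rewrite inE cE => Hc; apply/eqP; lia.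
have Himg : #|` [fset addn a b | b in BL]%fset| = #|` BL|.
  by rewrite card_in_imfset //= => x y _ _ /=; apply: addnI.
have := fsubset_leq_card EC; rewrite /E cardfsU Himg.
have := card_split2 B (u - Tn).
rewrite -/BL; lia.
Qed.

Lemma bound4 (Z1 Z2 : {fset nat}) u Tn m : (Z1 `&` Z2 = fset0)%fset -> Tn <= u ->
  (forall x, x \in Z2 -> x <= m) -> 0 < m -> m <= u - Tn + 1 ->
  u - Tn + 1 - m <= fsum Z2 ->
  #|` ss Z1 Tn| + #|` ss Z2 Tn| <=
  #|` ss (Z1 `|` Z2)%fset u| + #|` [fset a in ss Z1 Tn | a < Tn + m - (u - Tn)]%fset|.
Proof.
move=> H HT Hm m0 mL HW.
set A := ss Z1 Tn; set B := ss Z2 Tn; set C := ss (Z1 `|` Z2)%fset u.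
have [Y2 [HY2 Hs]] := gap m0 Hm HW.
set s := fsum Y2 in Hs.
set Ab := [fset a in A | a < Tn + m - (u - Tn)]%fset.
set E := (B `|` [fset addn a s | a in A])%fset.
have EC : (E `<=` C)%fset.
  apply/fsubsetP => c; rewrite inE => /orP [cB|].
    exact: (fsubsetP (ss_monoR Z1 Z2 HT)) _ cB.
  case/imfsetP => a /= /ssP [Y1 [HY1 Ha aT]] ->.
  rewrite -Ha; apply: ss_add => //; rewrite Ha; lia.
have HI : (B `&` [fset addn a s | a in A] `<=` [fset addn a s | a in Ab])%fset.
  apply/fsubsetP => c; rewrite inE => /andP [cB /imfsetP [a /= aA cE]].
  apply/imfsetP; exists a => //=; rewrite inE; apply/andP; split => //.
  have := ss_le cB; rewrite cE; lia.
have Himg : forall D : {fset nat}, #|` [fset addn a s | a in D]%fset| = #|` D|.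
  by move=> D; rewrite card_in_imfset //= => x y _ _ /=; apply: addIn.
have := fsubset_leq_card EC; have := fsubset_leq_card HI.
rewrite /E cardfsU !Himg; lia.
Qed.

Lemma bound5 (Z1 Z2 : {fset nat}) u Tn m y0 k : (Z1 `&` Z2 = fset0)%fset -> Tn <= u ->
  (forall x, x \in Z2 -> x <= m) -> 0 < m -> 0 < y0 ->
  k * (y0 + m - 1) <= u - Tn + 1 -> u - Tn < fsum Z2 ->
  k * #|` [fset a in ss Z1 Tn | a < y0]%fset| + #|` [fset a in ss Z1 Tn | u - Tn < a]%fset|
  <= #|` ss (Z1 `|` Z2)%fset u|.
Proof.
move=> H HT Hm m0 y00 Hk HW.
set A := ss Z1 Tn; set C := ss (Z1 `|` Z2)%fset u.
set Ab := [fset a in A | a < y0]%fset.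
set D := y0 + m - 1.
have D0 : 0 < D by rewrite /D; lia.
have Hind : forall j, j <= k -> j * #|` Ab| <= #|` [fset c in C | c < j * D]%fset|.
  elim => [|j IH] Hj; first by rewrite mul0n.
  have Hj' : j <= k by lia.
  have Hb : j * D <= fsum Z2.
    have : (j.+1) * D <= k * D by rewrite leq_mul2r Hj orbT.
    rewrite mulSn; lia.
  have [Y2 [HY2 Hs]] := gap m0 Hm Hb.
  set s := fsum Y2 in Hs.
  set F1 := [fset c in C | c < j * D]%fset.
  set img := [fset addn a s | a in Ab]%fset.
  have Hsub : (F1 `|` img `<=` [fset c in C | c < j.+1 * D])%fset.
    apply/fsubsetP => c; rewrite inE => /orP [|].
      rewrite !inE => /andP [cC cj]; rewrite cC /=; lia.
    case/imfsetP => a /=; rewrite inE => /andP [/ssP [Y1 [HY1 Ha aT]] ay] ->.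
    have HkD : j.+1 * D <= k * D by rewrite leq_mul2r Hj orbT.
    rewrite /D in HkD.
    rewrite inE /=; apply/andP; split; last by rewrite /D; lia.
    rewrite -Ha; apply: ss_add => //; rewrite Ha; rewrite /D in Hk; lia.
  have HI : (F1 `&` img = fset0)%fset.
    apply/fsetP => c; rewrite !inE; apply/negbTE/negP => /andP [].
    move=> /andP [_ c1] /imfsetP [a _ ca]; move: c1; rewrite ca /=; lia.
  have Himg : #|` img| = #|` Ab|.
    by rewrite card_in_imfset //= => x y _ _ /=; apply: addIn.
  have := fsubset_leq_card Hsub; rewrite cardfsU HI cardfs0 subn0 Himg.
  move: (IH Hj'); rewrite -/F1; lia.
have H1 := Hind k (leqnn k).
set F := [fset c in C | c < k * D]%fset.
set G := [fset c in C | u - Tn < c]%fset.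
have HG : #|` [fset a in A | u - Tn < a]%fset| <= #|` G|.
  apply: fsubset_leq_card; apply/fsubsetP => c; rewrite !inE => /andP [cA ->].
  by rewrite ((fsubsetP (ss_monoL Z1 Z2 HT)) _ cA).
have HFG : (F `&` G = fset0)%fset.
  apply/fsetP => c; rewrite !inE; apply/negbTE/negP => /andP [/andP [_ c1] /andP [_ c2]].
  rewrite /D in c1; lia.
have HC : (F `|` G `<=` C)%fset.
  by apply/fsubsetP => c; rewrite !inE => /orP [] /andP [].
have := fsubset_leq_card HC; rewrite cardfsU HFG cardfs0 subn0.
move: H1 HG; rewrite -/F; lia.
Qed.

End Helpers.
Import Helpers.

Local Open Scope ring_scope.

Lemma exists_floor {R : realFieldType} {t : R} {n : nat} : 0 <= t -> t < n%:R ->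
  exists k : nat, k%:R <= t /\ t < k.+1%:R.
Proof.
move=> t0; elim: n => [|n IH] Hn; first by move: (le_lt_trans t0 Hn); rewrite ltxx.
case: (ltP t n%:R) => H; first exact: IH.
by exists n.
Qed.

Lemma ss_eq {R : realFieldType} {X : {fset nat}} {t : R} {n : nat} :
  (forall k : nat, (k%:R <= t) = (k <= n)%N) -> subset_sums X t = ss X n.
Proof.
move=> Hk; apply/fsetP => s; apply/idP/idP.
  rewrite /subset_sums; move/imfsetP => [Y] /= /andP [HY Hn] ->.
  apply/ssP; exists Y; split => //; first by move: HY; rewrite fpowersetE.
  by rewrite -Hk.
move/ssP => [Y [HY <- Hn]]; rewrite /subset_sums; apply/imfsetP; exists Y => //=.
rewrite inE /= Hk Hn andbT; change (Y \in fpowerset X); by rewrite fpowersetE.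
Qed.

Lemma fmax_ge (Z : {fset nat}) z : z \in Z -> (z <= fmax Z)%N.
Proof. move=> zZ; rewrite /fmax; apply: (@leq_bigmax_seq _ _ xpredT (fun z => z) z) => //. Qed.

Lemma fsum_eq0 (Y : {fset nat}) : (forall y, y \in Y -> y = 0%N) -> fsum Y = 0%N.
Proof. by move=> H; rewrite /fsum big_seq; apply: big1 => y /H. Qed.

Lemma arL1 {R : realFieldType} (eps mu a b c x : R) :
  a + b <= c + 1 + x -> x <= (2 * eps + 4 * mu) * (a + b) ->
  (a + b) * (1 - 2 * eps - 4 * mu) <= c + 1.
Proof. move=> h1 h2; nra. Qed.

Lemma arL4 {R : realFieldType} (eps mu a b c x : R) :
  a + b <= c + x -> x <= (2 * eps + 4 * mu) * (a + b) + 1 ->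
  (a + b) * (1 - 2 * eps - 4 * mu) <= c + 1.
Proof. move=> h1 h2; nra. Qed.

Lemma arML {R : realFieldType} {eps m u Tn L : R} :
  m * 16 <= u -> L = u - Tn -> Tn <= (1 + eps) * u / 2 -> eps <= 1/4 -> 0 <= u ->
  m <= L + 1.
Proof. move=> h1 h2 h3 h4 h5; nra. Qed.

Lemma arFinal {R : realFieldType} {eps mu a b c ah tau k D Tn u m L : R} :
  k * tau + ah <= c -> L + 1 < (k + 1) * D -> D = 2 * Tn + 2 * m - u - 1 ->
  L = u - Tn -> Tn <= (1 + eps) * u / 2 -> mu * u = m ->
  (2 * eps + 4 * mu) * (a + b) < ah ->
  (2 * eps + 4 * mu) * (a + b) + 1 < tau ->
  0 <= eps -> 0 <= mu -> 0 < u -> 0 <= k -> 0 <= a + b ->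
  (a + b) * (1 - 2 * eps - 4 * mu) <= c + 1.
Proof.
move=> h1 h2 h3 h4 h5 h6 h7 h8 e0 mu0 u0 k0 N0.
have hD : D <= eps * u + 2 * m by lra.
have s1 : (1 - eps) * u / 2 <= (k + 1) * (eps * u + 2 * m).
  have : (k + 1) * D <= (k + 1) * (eps * u + 2 * m) by apply: ler_wpM2l; lra.
  lra.
have s2 : 1 - eps <= (k + 1) * (2 * eps + 4 * mu).
  rewrite -(ler_pM2r u0).
  have -> : (k + 1) * (2 * eps + 4 * mu) * u = 2 * ((k + 1) * (eps * u + 2 * (mu * u))) by ring.
  rewrite h6; lra.
have s3 : k * ((2 * eps + 4 * mu) * (a + b)) <= k * tau by apply: ler_wpM2l => //; lra.
have s4 : (a + b) * (1 - 2 * eps - 4 * mu) <= (a + b) * ((k + 1) * (2 * eps + 4 * mu)).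
  apply: ler_wpM2l => //; lra.
have : (a + b) * ((k + 1) * (2 * eps + 4 * mu)) = k * ((2 * eps + 4 * mu) * (a + b)) + (2 * eps + 4 * mu) * (a + b) by ring.
lra.
Qed.

Lemma nat_aux1 (y0 m : nat) : (0 < y0)%N -> (0 < m)%N -> (0 < y0 + m - 1)%N.
Proof. lia. Qed.

Lemma nat_aux2 (u Tn m : nat) : (u - Tn < Tn)%N -> (0 < m)%N -> (Tn <= u)%N ->
  ((Tn + m - (u - Tn)) + m - 1 + u + 1 = Tn + Tn + m + m)%N.
Proof. lia. Qed.

Lemma nat_aux3 (u Tn m : nat) : (u - Tn < Tn)%N -> (0 < Tn + m - (u - Tn))%N.
Proof. lia. Qed.

Theorem mainTheorem6 (R : realFieldType) (u : nat) (Z Z1 Z2 : {fset nat}) (eps : R) :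
  (1 <= u)%N ->
  (forall z, z \in Z -> (z <= u)%N) ->
  Z = (Z1 `|` Z2)%fset ->
  (Z1 `&` Z2 = fset0)%fset ->
  let mu : R := (fmax Z)%:R / u%:R in
  mu <= 1 / 16 ->
  0 <= eps -> eps <= 1 / 4 ->
  let t : R := (1 + eps) * u%:R / 2 in
  (#|` subset_sums Z1 t|%fset)%:R + (#|` subset_sums Z2 t|%fset)%:R
  <= ((#|` subset_sums Z (u%:R : R)|%fset)%:R + 1) / (1 - 2 * eps - 4 * mu).
Proof.
move=> hu Hz HZ Hdisj mu Hmu He0 He1; cbv zeta; set t := (1 + eps) * u%:R / 2.
have Hmz : forall z, z \in Z -> (z <= fmax Z)%N by move=> z; exact: fmax_ge.
have ur0 : 0 < u%:R :> R by rewrite ltr0n.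
have Hmu_eq : mu * u%:R = (fmax Z)%:R by rewrite /mu divfK // gt_eqF.
have mu0 : 0 <= mu by rewrite /mu divr_ge0.
have Hm16 : (fmax Z)%:R * 16 <= u%:R :> R by rewrite -Hmu_eq; nra.
have t0 : 0 <= t by rewrite /t; nra.
have tu : t <= u%:R * 5 / 8 by rewrite /t; nra.
have Htu : t < u.+1%:R by rewrite -addn1 natrD; nra.
have [Tn [HT1 HT2]] := exists_floor t0 Htu.
have Hk : forall k : nat, (k%:R <= t) = (k <= Tn)%N.
  move=> k; apply/idP/idP => H.
    have : k%:R < Tn.+1%:R :> R by exact: le_lt_trans H HT2.
    by rewrite ltr_nat.
  apply: le_trans HT1; by rewrite ler_nat.
have Hku : forall k : nat, (k%:R <= (u%:R : R)) = (k <= u)%N by move=> k; rewrite ler_nat.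
rewrite (ss_eq Hk) (ss_eq Hk) (ss_eq Hku).
have TnU : (Tn <= u)%N by rewrite -(ler_nat R); apply: (le_trans HT1); nra.
have Hd : 0 < 1 - 2 * eps - 4 * mu by lra.
rewrite ler_pdivlMr //.
move: Hmz Hmu_eq Hm16; set m := fmax Z => Hmz Hmu_eq Hm16.
have Hm2 : forall x, x \in Z2 -> (x <= m)%N.
  by move=> x x2; apply: Hmz; rewrite HZ inE x2 orbT.
rewrite HZ.
set A := ss Z1 Tn; set B := ss Z2 Tn; set C := ss (Z1 `|` Z2)%fset u.
set L := (u - Tn)%N.
have b1 := bound1 Z1 Z2 u Tn Hdisj TnU.
have b2 := bound1 Z2 Z1 u Tn (etrans (fsetIC _ _) Hdisj) TnU.
rewrite fsetUC -/C -/A -/B -/L in b2.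
rewrite -/B -/L in b1.
set bh := #|` [fset b in B | (L < b)%N]%fset| in b1.
set ah := #|` [fset b in A | (L < b)%N]%fset| in b2.
move: b1 b2; rewrite -!(ler_nat R) !natrD => b1 b2.
set NA := #|` A| in b1 b2 *; set NB := #|` B| in b1 b2 *; set NC := #|` C| in b1 b2 *.
have LR : (L%:R : R) = u%:R - Tn%:R by rewrite /L natrB.
case: (lerP (bh%:R) ((2 * eps + 4 * mu) * (NA%:R + NB%:R))) => Hbh.
  exact: arL1 b1 Hbh.
have N0 : 0 <= (NA%:R + NB%:R : R) by rewrite addr_ge0.
have de0 : 0 <= 2 * eps + 4 * mu by lra.
have bh0 : (0 < bh)%N.
  by rewrite -(ltr0n R); apply: le_lt_trans Hbh; rewrite mulr_ge0.
have : [fset b in B | (L < b)%N]%fset != fset0 by rewrite -cardfs_gt0.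
case/fset0Pn => b0; rewrite !inE => /andP [b0B Lb0].
case/ssP: b0B => Y [HY Hb0 b0T].
have W2 : (L < fsum Z2)%N by have := fsum_sub HY; rewrite Hb0; exact: leq_trans Lb0.
have LT : (L < Tn)%N by exact: leq_trans Lb0 b0T.
have m0 : (0 < m)%N.
  case: (posnP m) => // m0.
  have : fsum Y = 0%N.
    apply: fsum_eq0 => y yY; apply/eqP; rewrite -leqn0 -m0.
    exact: Hm2 y (fsubsetP HY y yY).
  by move: Lb0; rewrite -Hb0 => /[swap] ->.
case: (lerP (ah%:R) ((2 * eps + 4 * mu) * (NA%:R + NB%:R))) => Hah.
  by apply: arL1 Hah; rewrite addrC.
have mL : (m <= L + 1)%N.
  rewrite -(ler_nat R) natrD mulr1n; exact: (arML Hm16 LR HT1 He1 (ltW ur0)).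
have HW' : (u - Tn + 1 - m <= fsum Z2)%N.
  by apply: leq_trans (leq_subr _ _) _; rewrite addn1.
have b4 := bound4 Z1 Z2 u Tn m Hdisj TnU Hm2 m0 mL HW'.
rewrite -/A -/B -/C -/L in b4.
set tau := #|` [fset a in A | (a < Tn + m - L)%N]%fset| in b4.
move: b4; rewrite -(ler_nat R) !natrD => b4.
case: (lerP (tau%:R) ((2 * eps + 4 * mu) * (NA%:R + NB%:R) + 1)) => Htau.
  exact: arL4 b4 Htau.
have y00 := nat_aux3 u Tn m LT.
have D0 := nat_aux1 _ _ y00 m0.
set D := (Tn + m - L + m - 1)%N in D0.
set k := ((L + 1) %/ D)%N.
have Hk1 : (k * (Tn + m - L + m - 1) <= u - Tn + 1)%N := leq_trunc_div (L + 1) D.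
have b5 := bound5 Z1 Z2 u Tn m (Tn + m - L) k Hdisj TnU Hm2 m0 y00 Hk1 W2.
rewrite -/A -/C -/L -/tau -/ah -/NC in b5.
have kc := ltn_ceil (L + 1) D0.
move: b5 kc; rewrite -(ler_nat R) -(ltr_nat R) !natrD !natrM mulr1n => b5 kc.
have DR : (D%:R : R) = 2 * Tn%:R + 2 * m%:R - u%:R - 1.
  have := nat_aux2 _ _ _ LT m0 TnU; rewrite -/L -/D => /(congr1 (fun n : nat => (n%:R : R))) /=.
  rewrite !natrD => HD.
  lra.
apply: (arFinal b5 _ DR LR HT1 Hmu_eq Hah Htau He0 mu0 ur0 (ler0n _ _) N0).
apply: (lt_le_trans kc); rewrite mulrDl mul1r addrC; exact: lexx.
Qed.
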